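(* Let $C'$ be a generic smooth non-hyperelliptic curve of genus $3$ over $\mathbb{C}$. Let $L'_1\subsetneq L'_2\subsetneq L'_3$ and $\tilde L_1\subsetneq\tilde L_2\subsetneq\tilde L_3$ be two full isotropic flags in $\mathrm{Jac}(C')[2]$ (so $|L'_k|=|\tilde L_k|=2^k$ and $L'_3,\tilde L_3$ are maximal isotropic) such that $\tilde L_1\oplus L'_3={L'_2}^{\perp}$, $\tilde L_2\oplus L'_3={L'_1}^{\perp}$ and $\tilde L_3\oplus L'_3=\mathrm{Jac}(C')[2]$. Let $\alpha'$ be the nonzero element of $L'_1$. Then for every subgroup $H\subset\tilde L_3$ of order $4$: $\#(\Gamma_H\cap\Sigma_{\alpha'})=0$ if $H=\tilde L_2$, and $\#(\Gamma_H\cap\Sigma_{\alpha'})=2$ otherwise.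
   Context: $\mathrm{Jac}(C')[2]\cong\mathbb{F}_2^6$ carries the Weil pairing $\langle\cdot,\cdot\rangle$, a nondegenerate symplectic form; for a subgroup $G$, $G^\perp=\{a:\langle a,g\rangle=0\ \forall g\in G\}$. A theta characteristic is a divisor class $\theta$ with $2\theta=K_{C'}$, odd if $h^0(\theta)$ is odd. For nonzero $\gamma$, the Steiner system $\Sigma_\gamma$ is the set of odd theta characteristics $\theta$ with $\theta+\gamma$ odd. For an isotropic subgroup $H$ of order $4$, $\Gamma_H$ denotes the set of odd theta characteristics $\theta$ such that $\theta+h$ is odd for all $h\in H$ (a set of the form $\{\theta_0+h: h\in H\}$ with four elements). *)

(* Defs.v *)
(* Abstract combinatorial model of the 2-torsion of the
   Jacobian of a genus-3 curve together with its theta characteristics. *)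
From mathcomp Require Import all_boot all_order all_algebra.
Set Implicit Arguments. Unset Strict Implicit. Unset Printing Implicit Defensive.
Import GRing.Theory.
Local Open Scope ring_scope.

(* Jac(C')[2] ~ F_2^6 *)
Definition V := 'rV['F_2]_6.

Definition symplectic (w : V -> V -> 'F_2) : Prop :=
  [/\ (forall x y z, w (x + y) z = w x z + w y z),
      (forall x y z, w x (y + z) = w x y + w x z),
      (forall x, w x x = 0) &
      (forall x, (forall y, w x y = 0) -> x = 0)].

(* Theta characteristics: a J[2]-torsor Th (act t a = t + a) with parity
   function odd (odd t <-> h^0(t) odd), satisfying the Riemann--Mumford
   relation: a |-> e(t+a) - e(t) is a quadratic form with polar form the
   Weil pairing; in genus 3 there are exactly 2^(g-1)(2^g-1) = 28 odd ones. *)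
Definition theta_structure (w : V -> V -> 'F_2) (Th : finType)
    (act : Th -> V -> Th) (odd : pred Th) : Prop :=
  [/\ (forall t, act t 0 = t),
      (forall t a b, act (act t a) b = act t (a + b)),
      (forall t s, exists! a, act t a = s),
      (forall t a b,
         odd (act t (a + b)) (+) odd (act t a) (+) odd (act t b) (+) odd t
         = (w a b == 1)) &
      #|[set t | odd t]| = 28%N].

Definition subgroupV (G : {set V}) : Prop :=
  (0 : V) \in G /\ forall x y, x \in G -> y \in G -> x + y \in G.

Definition isotropic (w : V -> V -> 'F_2) (G : {set V}) : Prop :=
  forall x y, x \in G -> y \in G -> w x y = 0.

Definition perp (w : V -> V -> 'F_2) (G : {set V}) : {set V} :=
  [set a | [forall g in G, w a g == 0]].

Definition dsum (A B C : {set V}) : Prop :=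
  A :&: B = [set 0 : V] /\ [set a + b | a in A, b in B] = C.

Definition iso_flag (w : V -> V -> 'F_2) (L1 L2 L3 : {set V}) : Prop :=
  [/\ [/\ subgroupV L1, subgroupV L2 & subgroupV L3],
      [/\ #|L1| = 2%N, #|L2| = 4%N & #|L3| = 8%N],
      L1 \proper L2, L2 \proper L3 & isotropic w L3].

Definition Sigma (Th : finType) (act : Th -> V -> Th) (odd : pred Th)
    (g : V) : {set Th} :=
  [set t | odd t && odd (act t g)].

Definition Gamma (Th : finType) (act : Th -> V -> Th) (odd : pred Th)
    (H : {set V}) : {set Th} :=
  [set t | odd t && [forall h in H, odd (act t h)]].

(* Main.v *)
Require Import Defs.
From mathcomp Require Import all_boot all_order all_algebra.
From mathcomp Require Import zify.
Local Open Scope ring_scope.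
Import GRing.Theory.

Lemma F2c (z : 'F_2) : z = 0 \/ z = 1.
Proof. case: z => [[|[|]]] //= ? ; [left|right]; exact/val_inj. Qed.

Lemma F2_11 : (1 + 1 : 'F_2) = 0.
Proof. exact/val_inj. Qed.

Lemma addvv (v : V) : v + v = 0.
Proof.
apply/matrixP => i j; rewrite !mxE; case: (F2c (v i j)) => ->;
  [by rewrite addr0 | exact: F2_11].
Qed.

Lemma addv_eq0 (a b : V) : (a + b == 0) = (a == b).
Proof.
rewrite addr_eq0; congr (_ == _).
by apply/eqP; rewrite eq_sym -addr_eq0 addvv.
Qed.

Lemma addvl_eq (a b : V) : (a + b == a) = (b == 0).
Proof. by rewrite -{2}[a]addr0 (inj_eq (addrI a)). Qed.

Lemma addvr_eq (a b : V) : (a + b == b) = (a == 0).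
Proof. by rewrite -{2}[b]add0r (inj_eq (addIr b)). Qed.

Lemma xorK4 (p q r s : bool) : p = q (+) r (+) s (+) (p (+) q (+) r (+) s).
Proof. by case: p; case: q; case: r; case: s. Qed.

Definition W (w : V -> V -> 'F_2) a b := (w a b == 1).

Lemma w0 (w : V -> V -> 'F_2) : symplectic w -> forall y, w 0 y = 0.
Proof.
case=> hl _ _ _ y; have := hl 0 0 y; rewrite addr0.
case: (F2c (w 0 y)) => -> //; rewrite F2_11 => e; exact/esym.
Qed.

Lemma w_sym (w : V -> V -> 'F_2) : symplectic w -> forall x y, w x y = w y x.
Proof.
case=> hl hr ha _ x y.
have := ha (x + y); rewrite hl !hr !ha add0r addr0 => /eqP.
rewrite addr_eq0 => /eqP ->.
case: (F2c (w y x)) => ->; [by rewrite oppr0 | exact/val_inj].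
Qed.

Lemma WD (w : V -> V -> 'F_2) : symplectic w ->
  forall a b c, W w (a + b) c = W w a c (+) W w b c.
Proof.
case=> hl _ _ _ a b c; rewrite /W hl.
by case: (F2c (w a c)) => ->; case: (F2c (w b c)) => ->;
  rewrite ?add0r ?addr0 ?F2_11.
Qed.

Lemma W0 (w : V -> V -> 'F_2) a b : w a b = 0 -> W w a b = false.
Proof. by rewrite /W => ->. Qed.

Lemma W0' (w : V -> V -> 'F_2) a b : W w a b = false -> w a b = 0.
Proof. by rewrite /W; case: (F2c (w a b)) => -> //; rewrite eqxx. Qed.

Lemma cardsum (P : pred V) : (\sum_(x : V) (P x : nat))%N = #|[set x | P x]|.
Proof.
rewrite -sum1_card [RHS]big_mkcond /=; apply: eq_bigr => x _; rewrite inE.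
by case: (P x).
Qed.

Lemma int_half (S : int) : S = - S -> S = 0.
Proof. lia. Qed.

Lemma cardV : #|[set: V]| = 64%N.
Proof. by rewrite cardsT card_mx card_Fp. Qed.

Theorem lemma2p6 (w : V -> V -> 'F_2) (Th : finType) (act : Th -> V -> Th)
    (odd : pred Th) (L1 L2 L3 Lt1 Lt2 Lt3 : {set V}) (alpha : V) :
  symplectic w ->
  theta_structure w act odd ->
  iso_flag w L1 L2 L3 ->
  iso_flag w Lt1 Lt2 Lt3 ->
  dsum Lt1 L3 (perp w L2) ->
  dsum Lt2 L3 (perp w L1) ->
  dsum Lt3 L3 [set: V] ->
  alpha \in L1 -> alpha != 0 ->
  forall H : {set V}, subgroupV H -> H \subset Lt3 -> #|H| = 4%N ->
    #|Gamma act odd H :&: Sigma act odd alpha| = (if H == Lt2 then 0 else 2)%N.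
Proof.
move=> hsym [act0 actA actU actQ card28] [[sg1 sg2 sg3] [c1 c2 c3] p12 p23 iso3]
  [[sgt1 sgt2 sgt3] [ct1 ct2 ct3] pt12 pt23 isot3] ds1 ds2 ds3 aL1 anz
  H sgH HLt3 cH.
have wsym := @w_sym w hsym.
have w0y := @w0 w hsym.
have WDw := @WD w hsym.
case: (hsym) => wl wr wa wnd.
have [t0 _] : exists t0 : Th, odd t0.
  have : (0 < #|[set t | odd t]|)%N by rewrite card28.
  by case/card_gt0P => t; rewrite inE => ?; exists t.
pose f x := odd (act t0 x).
have actinj : injective (act t0).
  move=> a b e; case: (actU t0 (act t0 a)) => a0 [_ u].
  by rewrite -(u a) // -(u b).
have actsurj : forall t, exists x, act t0 x = t.
  by move=> t; case: (actU t0 t) => a0 [e _]; exists a0.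
have cardpre : forall A : {set Th}, #|act t0 @^-1: A| = #|A|.
  move=> A; rewrite -(card_imset (act t0 @^-1: A) actinj); apply: eq_card => t.
  apply/imsetP/idP => [[x]|tA]; first by rewrite inE => xA ->.
  by case: (actsurj t) => x ex; exists x => //; rewrite inE ex.
have rel : forall x a b, f (x + (a + b)) = f (x + a) (+) f (x + b) (+) f x (+) W w a b.
  move=> x a b; have := actQ (act t0 x) a b; rewrite !actA => e.
  by rewrite /W -e /f; apply: xorK4.
have relb : forall x b, f (x + b) = f x (+) f b (+) f 0 (+) W w x b.
  by move=> x b; have := rel 0 x b; rewrite !add0r.
have card28V : #|[set x | f x]| = 28%N.
  rewrite -card28 -cardpre; apply: eq_card => x; by rewrite !inE.
pose e (b : bool) : int := if b then -1 else 1.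
pose E x := e (f x).
have sumE : \sum_(x : V) E x = 8.
  have h : forall x, E x = 1 - ((f x : nat)%:R *+ 2).
    by move=> x; rewrite /E /e; case: (f x).
  rewrite (eq_bigr _ (fun x _ => h x)) sumrB sumr_const sumrMnl -natr_sum.
  have cV : #|V| = 64%N by rewrite -cardsT cardV.
  rewrite cardsum card28V cV; exact/eqP.
have sumT : forall b, \sum_(x : V) E (x + b) = 8.
  by move=> b; rewrite -sumE [RHS](reindex_inj (addIr b)).
have sumW : forall b, b != 0 -> \sum_(x : V) e (W w x b) = 0.
  move=> b bnz.
  have [y wy] : exists y, w b y != 0.
    apply/existsP; apply: contraR bnz; rewrite negb_exists => /forallP hb.
    by apply/eqP; apply: wnd => y; apply/eqP/negPn/hb.
  have Wy : W w y b.
    rewrite /W wsym; case: (F2c (w b y)) wy => ->; first by rewrite eqxx.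
    by rewrite eqxx.
  set S := \sum_x _.
  have : S = - S.
    rewrite /S [LHS](reindex_inj (addIr y)) -sumrN; apply: eq_bigr => x _.
    by rewrite WDw Wy /e; case: (W w x b).
  exact: int_half.
have sumP : forall b, b != 0 -> \sum_(x : V) E x * E (x + b) = 0.
  move=> b bnz.
  have h : forall x, E x * E (x + b) = e (f b (+) f 0) * e (W w x b).
    move=> x; rewrite /E relb /e.
    by case: (f x); case: (f b); case: (f 0); case: (W w x b).
  by rewrite (eq_bigr _ (fun x _ => h x)) -mulr_sumr sumW // mulr0.
case: sgH => H0 Hadd.
have cH3 : #|H :\ 0| = 3%N.
  by move: cH; rewrite (cardsD1 0) H0 add1n => -[].
have [h1 h1H h1nz] : exists2 h1, h1 \in H & h1 != 0.
  have : (0 < #|H :\ 0%R|)%N by rewrite cH3.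
  by case/card_gt0P => h; rewrite !inE => /andP[? ?]; exists h.
have c2' : #|H :\ 0 :\ h1| = 2%N.
  by move: cH3; rewrite (cardsD1 h1) !inE h1nz h1H add1n => -[].
have [h2 h2H /andP[h2nz h21]] : exists2 h2, h2 \in H & (h2 != 0) && (h2 != h1).
  have : (0 < #|H :\ 0%R :\ h1|)%N by rewrite c2'.
  by case/card_gt0P => h; rewrite !inE => /and3P[? ? ?]; exists h => //; apply/andP.
have c1' : #|H :\ 0 :\ h1 :\ h2| = 1%N.
  by move: c2'; rewrite (cardsD1 h2) !inE h2nz h21 h2H add1n => -[].
have h12nz : h1 + h2 != 0 by rewrite addv_eq0 eq_sym.
have h121 : h1 + h2 != h1 by rewrite addvl_eq.
have h122 : h1 + h2 != h2 by rewrite addvr_eq.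
have Hmem : forall h, h \in H -> [\/ h = 0, h = h1, h = h2 | h = h1 + h2].
  move=> h hH.
  case: (eqVneq h 0) => [->|n0]; first by constructor 1.
  case: (eqVneq h h1) => [->|n1]; first by constructor 2.
  case: (eqVneq h h2) => [->|n2]; first by constructor 3.
  constructor 4.
  move/eqP: c1'; case/cards1P => y ey.
  have : h \in H :\ 0 :\ h1 :\ h2 by rewrite !inE n0 n1 n2 hH.
  have : h1 + h2 \in H :\ 0 :\ h1 :\ h2 by rewrite !inE h12nz h121 h122 Hadd.
  by rewrite ey !inE => /eqP -> /eqP.
have HE : forall P : pred V, [forall h in H, P h] = [&& P 0, P h1, P h2 & P (h1 + h2)].
  move=> P; apply/forall_inP/and4P => [hP | [p0 p1 p2 p3] h /Hmem].
    by split; apply: hP => //; apply: Hadd.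
  by case=> ->.
have sub23 := proper_sub pt23.
have aL3 : alpha \in L3 by apply: (subsetP (proper_sub p23)); apply: (subsetP (proper_sub p12)).
have hL3 : forall h, h \in H -> h \in Lt3 by move=> h; apply: (subsetP HLt3).
have nzA : forall h, h \in Lt3 -> h + alpha != 0.
  move=> h hL; rewrite addv_eq0; apply: contra anz => /eqP eh.
  have : alpha \in Lt3 :&: L3 by rewrite inE aL3 andbT -eh.
  by rewrite ds3.1 inE.
have perpL1 : forall h, h \in Lt2 -> w h alpha = 0.
  move=> h hL.
  have : h + 0 \in perp w L1.
    by rewrite -ds2.2; apply: imset2_f => //; exact: sg3.1.
  by rewrite inE addr0 => /forall_inP/(_ alpha aL1)/eqP.
have W12 : W w h1 h2 = false by apply: W0; apply: isot3; apply: hL3.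
have cnt : #|Gamma act odd H :&: Sigma act odd alpha| =
    #|[set x | [&& f x, f (x + h1), f (x + h2), f (x + (h1 + h2)) & f (x + alpha)]]|.
  rewrite -cardpre; apply: eq_card => x; rewrite /Gamma /Sigma !inE HE !actA addr0.
  rewrite /f; by case: (odd (act t0 x)); case: (odd (act t0 (x + h1))); case: (odd (act t0 (x + h2))); case: (odd (act t0 (x + (h1 + h2)))); case: (odd (act t0 (x + alpha))).
have pw : forall x, (([&& f x, f (x + h1), f (x + h2), f (x + (h1 + h2)) & f (x + alpha)] : nat)%:R : int) * 16 = 1 + (E x * E (x + h1) + E x * E (x + h2) + E x * E (x + alpha) + E x * E (x + (h1 + h2)) + e (W w h1 alpha) * (E x * E (x + (h1 + alpha))) + e (W w h2 alpha) * (E x * E (x + (h2 + alpha))) + e (W w h1 alpha (+) W w h2 alpha) * (E x * E (x + (h1 + h2 + alpha)))) - (E x + E (x + h1) + E (x + h2) + E (x + alpha) + E (x + (h1 + h2)) + e (W w h1 alpha) * E (x + (h1 + alpha)) + e (W w h2 alpha) * E (x + (h2 + alpha)) + e (W w h1 alpha (+) W w h2 alpha) * E (x + (h1 + h2 + alpha))).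
  move=> x; rewrite /E (rel x (h1 + h2) alpha) (rel x h1 h2) (rel x h1 alpha) (rel x h2 alpha) WDw W12.
  by case: (f x); case: (f (x + h1)); case: (f (x + h2)); case: (f (x + alpha)); case: (W w h1 alpha); case: (W w h2 alpha).
have cV : #|V| = 64%N by rewrite -cardsT cardV.
have tot := congr1 (fun n : nat => (n%:R : int) * 16) cnt.
move: tot => /=; rewrite -cardsum natr_sum mulr_suml (eq_bigr _ (fun x _ => pw x)).
rewrite sumrB !big_split /= sumr_const -!mulr_sumr.
rewrite (sumP _ h1nz) (sumP _ h2nz) (sumP _ anz) (sumP _ h12nz).
rewrite (sumP _ (nzA _ (hL3 _ h1H))) (sumP _ (nzA _ (hL3 _ h2H))).
rewrite (sumP _ (nzA _ (hL3 _ (Hadd _ _ h1H h2H)))) sumE !sumT cV.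
case: eqP => [HL|HnL].
  have Wh1 : W w h1 alpha = false by apply: W0; apply: perpL1; rewrite -HL.
  have Wh2 : W w h2 alpha = false by apply: W0; apply: perpL1; rewrite -HL.
  rewrite Wh1 Wh2 /e /=; move: (#|Gamma act odd H :&: Sigma act odd alpha|) => N hN.
  clear -hN; lia.
have hor : W w h1 alpha || W w h2 alpha.
  apply/negPn/negP; rewrite negb_or => /andP[/negbTE n1 /negbTE n2].
  have hall : forall h, h \in H -> w h alpha = 0.
    by move=> h /Hmem [] ->; rewrite ?w0y ?wl ?(W0' _ _ _ n1) ?(W0' _ _ _ n2) ?addr0.
  have [h hH hnL] : exists2 h, h \in H & h \notin Lt2.
    case: (boolP (H \subset Lt2)) => sub; last by apply/subsetPn.
    by exfalso; apply: HnL; apply/eqP; rewrite eqEcard sub cH ct2.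
  pose T := [set l + h | l in Lt2].
  have cT : #|T| = 4%N by rewrite card_imset ?ct2 //; apply: addIr.
  have dT : Lt2 :&: T = set0.
    apply/setP => y; rewrite !inE; apply/negP => /andP[yL /imsetP[l lL ey]].
    have : h = y + l by rewrite ey addrC addrA addvv add0r.
    by move=> eh; move: hnL; rewrite eh (sgt2.2 _ _ yL lL).
  have UL : Lt2 :|: T = Lt3.
    apply/eqP; rewrite eqEcard cardsU dT cards0 cT ct2 ct3 /= andbT.
    rewrite subUset sub23 /=; apply/subsetP => _ /imsetP[l lL ->].
    by apply: sgt3.2; [apply: (subsetP sub23) | apply: hL3].
  have hL3' : forall g, g \in Lt3 -> w g alpha = 0.
    move=> g; rewrite -UL inE => /orP[/perpL1 // | /imsetP[l lL ->]].
    by rewrite wl perpL1 // hall // addr0.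
  have hV : forall v, w v alpha = 0.
    move=> v; have : v \in [set: V] by rewrite inE.
    rewrite -ds3.2 => /imset2P[a b aL bL ->].
    by rewrite wl hL3' // iso3 // addr0.
  by move/eqP: anz; apply; apply: wnd => y; rewrite wsym hV.
move: (#|Gamma act odd H :&: Sigma act odd alpha|) => N.
case: (W w h1 alpha) (W w h2 alpha) hor => [] [] //= _; rewrite /e /= => hN; clear -hN; lia.
Qed.
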